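(* Let $n$ be a number and $p\ge 0$ an integer such that the ball $\langle n;-\frac{1}{2^p}\rangle$ is balanced. Then for every integer $m\ge 0$, every integer $q\ge 0$, and every $a$ that is either an odd integer with $0<a<2^q$ or $a=0$, such that $m+a2^{-q}>0$, and for any game $H$ whose value is $m+\frac{a}{2^q}$, \[\Big\langle n;-\frac{1}{2^p}\Big\rangle\mathbin{:}H=n+\frac{1}{2^p}-\frac{1}{2^{p+m}}+\frac{a}{2^{p+m+q+1}}.\]
   Context: Games are short normal-play combinatorial games, written $\{L\mid R\}$, with the usual disjunctive sum and equality of values. A number is a game with $G^L<G<G^R$ for all options, with values identified with dyadic rationals. The ordinal sum is $G\mathbin{:}H\cong\{L(G),\,G\mathbin{:}L(H)\mid R(G),\,G\mathbin{:}R(H)\}$. For numbers $m,\Delta$, the ball $\langle m;\Delta\rangle$ is the game $\{x\mid y\}$ where $x,y$ are the canonical forms of $m+\Delta$ and $m-\Delta$; it is balanced if $\langle m;\Delta\rangle+\langle m;\Delta\rangle=m+m$. *)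

(* Defs.v *)
From mathcomp Require Import all_boot all_order all_algebra.
Set Implicit Arguments. Unset Strict Implicit. Unset Printing Implicit Defensive.
Import Order.TTheory GRing.Theory Num.Theory.

Inductive game : Type := Game of seq game & seq game.

Definition leftopts (G : game) := let: Game L _ := G in L.
Definition rightopts (G : game) := let: Game _ R := G in R.

(** cmp G H = (G <= H, H <= G), with the usual normal-play recursive order:
    G <= H  iff  no G^L with H <= G^L and no H^R with H^R <= G. *)
Fixpoint cmp (G : game) : game -> bool * bool :=
  match G with Game GL GR =>
    fix cmpG (H : game) : bool * bool :=
      match H with Game HL HR =>
        ( all (fun gl => ~~ (cmp gl H).2) GL && all (fun hr => ~~ (cmpG hr).2) HR,
          all (fun hl => ~~ (cmpG hl).1) HL && all (fun gr => ~~ (cmp gr H).1) GR )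
      end
  end.

Definition game_le (G H : game) : bool := (cmp G H).1.
Definition game_eq (G H : game) : bool := game_le G H && game_le H G.

Fixpoint add (G : game) : game -> game :=
  match G with Game GL GR =>
    fix addG (H : game) : game :=
      match H with Game HL HR =>
        Game ([seq add gl H | gl <- GL] ++ [seq addG hl | hl <- HL])
             ([seq add gr H | gr <- GR] ++ [seq addG hr | hr <- HR])
      end
  end.

Fixpoint neg (G : game) : game :=
  match G with Game GL GR => Game [seq neg g | g <- GR] [seq neg g | g <- GL] end.

Fixpoint ordsum (G H : game) {struct H} : game :=
  match H with Game HL HR =>
    Game (leftopts G ++ [seq ordsum G h | h <- HL])
         (rightopts G ++ [seq ordsum G h | h <- HR])
  end.

Fixpoint canon_nat (k : nat) : game :=
  match k with 0 => Game [::] [::] | k'.+1 => Game [:: canon_nat k'] [::] end.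

Definition canon_int (z : int) : game :=
  match z with Posz k => canon_nat k | Negz k => neg (canon_nat k.+1) end.

(** canonical form of j / 2^e *)
Fixpoint canon_dy (j : int) (e : nat) : game :=
  match e with
  | 0 => canon_int j
  | e'.+1 =>
      if odd `|j|%N then
        Game [:: canon_dy ((j - 1) %/ 2)%Z e'] [:: canon_dy ((j + 1) %/ 2)%Z e']
      else canon_dy (j %/ 2)%Z e'
  end.

Local Open Scope ring_scope.

Definition dyadic (x : rat) : Prop := exists (j : int) (e : nat), x = j%:~R / 2%:R ^+ e.

(** Canonical form of a rational (meaningful for dyadic x: denq x = 2^e). *)
Definition canon (x : rat) : game := canon_dy (numq x) (trunc_log 2 `|denq x|%N).

Definition ball (m D : rat) : game := Game [:: canon (m + D)] [:: canon (m - D)].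

Definition balanced (m D : rat) : bool :=
  game_eq (add (ball m D) (ball m D)) (add (canon m) (canon m)).

(* Main.v *)
Require Import Defs.
From mathcomp Require Import all_boot all_order all_algebra.
From mathcomp Require Import zify ring lra.
Import Order.TTheory GRing.Theory Num.Theory.
Set Implicit Arguments. Unset Strict Implicit. Unset Printing Implicit Defensive.

Fixpoint gsize (G : game) : nat :=
  match G with Game L R => (sumn (map gsize L) + sumn (map gsize R)).+1 end.

Lemma in_sumn (s : seq game) g : List.In g s -> (gsize g <= sumn (map gsize s))%N.
Proof.
elim: s => //= x s IH [<-|/IH]; lia.
Qed.

Lemma gsizeL G g : List.In g (leftopts G) -> (gsize g < gsize G)%N.
Proof. case: G => L R /= /in_sumn; lia. Qed.
Lemma gsizeR G g : List.In g (rightopts G) -> (gsize g < gsize G)%N.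
Proof. case: G => L R /= /in_sumn; lia. Qed.

Lemma allIn (T : Type) (p : pred T) s : reflect (forall x, List.In x s -> p x) (all p s).
Proof.
elim: s => [|x s IH] /=; first by constructor.
apply: (iffP andP) => [[px /IH H] y [<-|/H]//|H]; split; first by apply H; left.
by apply/IH => y hy; apply H; right.
Qed.

Lemma allInN (T : Type) (p : pred T) s : ~~ all p s -> exists x, List.In x s /\ ~~ p x.
Proof.
elim: s => [|x s IH] //=; rewrite negb_and => /orP [hx|/IH [y [hy hy']]].
  by exists x; split; [left|].
by exists y; split; [right|].
Qed.

Lemma in_map_game (T : Type) (f : T -> game) s x : List.In x s -> List.In (f x) (map f s).
Proof. by elim: s => //= y s IH [->|/IH]; [left|right]. Qed.

Lemma in_map_inv (T : Type) (f : T -> game) s g : List.In g (map f s) -> exists x, List.In x s /\ g = f x.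
Proof. elim: s => //= y s IH [<-|/IH [x [h ->]]]; [exists y; split; [left|]|exists x; split; [right|]] => //. Qed.

Lemma ind2 (P : game -> game -> Prop) :
  (forall G H, (forall G' H', (gsize G' + gsize H' < gsize G + gsize H)%N -> P G' H') -> P G H) ->
  forall G H, P G H.
Proof.
move=> IH G H; move: {2}(gsize G + gsize H)%N (leqnn (gsize G + gsize H)) => N.
elim: N G H => [|N IHN] G H hN; apply IH => G' H' h; [lia|apply IHN; lia].
Qed.

Lemma ind3 (P : game -> game -> game -> Prop) :
  (forall G H K, (forall G' H' K', (gsize G' + gsize H' + gsize K' < gsize G + gsize H + gsize K)%N -> P G' H' K') -> P G H K) ->
  forall G H K, P G H K.
Proof.
move=> IH G H K; move: {2}(gsize G + gsize H + gsize K)%N (leqnn (gsize G + gsize H + gsize K)) => N.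
elim: N G H K => [|N IHN] G H K hN; apply IH => G' H' K' h; [lia|apply IHN; lia].
Qed.

Lemma eq_all_In (T : Type) (p q : pred T) s : (forall x, List.In x s -> p x = q x) -> all p s = all q s.
Proof. elim: s => //= x s IH H; rewrite H; [rewrite IH // => y hy; apply H; right|left]; done. Qed.

Lemma cmpE G H : cmp G H =
  (all (fun gl => ~~ (cmp gl H).2) (leftopts G) && all (fun hr => ~~ (cmp G hr).2) (rightopts H),
   all (fun hl => ~~ (cmp G hl).1) (leftopts H) && all (fun gr => ~~ (cmp gr H).1) (rightopts G)).
Proof. by case: G; case: H. Qed.

Lemma cmp_swap G H : (cmp G H).2 = (cmp H G).1.
Proof.
move: G H; apply: ind2 => G H IH; rewrite (cmpE G H) (cmpE H G) /=.
congr andb; apply: eq_all_In => x hx; congr negb.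
  by rewrite IH //; have := gsizeL hx; lia.
by rewrite IH //; have := gsizeR hx; lia.
Qed.

Notation le := game_le.

Lemma leE G H : le G H = all (fun gl => ~~ le H gl) (leftopts G) && all (fun hr => ~~ le hr G) (rightopts H).
Proof.
rewrite /game_le (cmpE G H) /=; congr andb; apply: eq_all_In => x _; by rewrite cmp_swap.
Qed.

Lemma le_refl_aux (G0 : game) : [/\ le G0 G0, (forall g, List.In g (leftopts G0) -> ~~ le G0 g)
   & (forall g, List.In g (rightopts G0) -> ~~ le g G0)].
Proof.
pose P (G : game) (H : game) := [/\ le G G, (forall g, List.In g (leftopts G) -> ~~ le G g)
   & (forall g, List.In g (rightopts G) -> ~~ le g G)].
suff k : forall G H, P G H by exact: (k G0 G0).
apply: ind2 => G H' IH; rewrite /P.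
have hL : forall g, List.In g (leftopts G) -> ~~ le G g.
  move=> g hg; rewrite leE negb_and; apply/orP; left; apply/negP => /allIn H.
  have := H g hg; have [-> _ _] := IH g H' ltac:(have := gsizeL hg; lia); done.
have hR : forall g, List.In g (rightopts G) -> ~~ le g G.
  move=> g hg; rewrite leE negb_and; apply/orP; right; apply/negP => /allIn H.
  have := H g hg; have [-> _ _] := IH g H' ltac:(have := gsizeR hg; lia); done.
split=> //; rewrite leE; apply/andP; split; apply/allIn => g hg; [exact: hL| exact: hR].
Qed.

Lemma gle_refl G : le G G. Proof. by case: (le_refl_aux G). Qed.
Lemma nle_L G g : List.In g (leftopts G) -> ~~ le G g. Proof. by case: (le_refl_aux G) => _ h _; apply h. Qed.
Lemma nle_R G g : List.In g (rightopts G) -> ~~ le g G. Proof. by case: (le_refl_aux G) => _ _ h; apply h. Qed.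

Lemma gle_trans G H K : le G H -> le H K -> le G K.
Proof.
move: G H K; apply: ind3 => G H K IH hGH hHK.
move: (hGH) (hHK); rewrite !leE => /andP [/allIn a1 /allIn a2] /andP [/allIn b1 /allIn b2].
apply/andP; split; apply/allIn => g hg; apply/negP => h.
  have := a1 g hg; rewrite (IH H K g) //; have := gsizeL hg; lia.
have := b2 g hg; rewrite (IH g G H) //; have := gsizeR hg; lia.
Qed.

Lemma lo_ordsum G X : leftopts (ordsum G X) = leftopts G ++ map (ordsum G) (leftopts X).
Proof. by case: X. Qed.
Lemma ro_ordsum G X : rightopts (ordsum G X) = rightopts G ++ map (ordsum G) (rightopts X).
Proof. by case: X. Qed.

Lemma allT (T : Type) (p : pred T) s : (forall x, List.In x s -> p x) -> all p s = true.
Proof. by move=> h; apply/allIn. Qed.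

Lemma le_ordsum G X Y : le (ordsum G X) (ordsum G Y) = le X Y.
Proof.
move: X Y; apply: ind2 => X Y IH.
rewrite leE [le X Y]leE lo_ordsum ro_ordsum !all_cat !all_map.
rewrite (allT (s := leftopts G)); last first.
  by move=> g hg; apply: nle_L; rewrite lo_ordsum; apply List.in_or_app; left.
rewrite (allT (s := rightopts G)); last first.
  by move=> g hg; apply: nle_R; rewrite ro_ordsum; apply List.in_or_app; left.
rewrite /=; congr andb; apply: eq_all_In => x hx /=; rewrite IH //.
  by have := gsizeL hx; lia.
by have := gsizeR hx; lia.
Qed.

Notation gadd := Defs.add.

Lemma lo_add G H : leftopts (gadd G H) = map (fun g => gadd g H) (leftopts G) ++ map (gadd G) (leftopts H).
Proof. by case: G; case: H. Qed.
Lemma ro_add G H : rightopts (gadd G H) = map (fun g => gadd g H) (rightopts G) ++ map (gadd G) (rightopts H).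
Proof. by case: G; case: H. Qed.

Lemma inL1 G H g : List.In g (leftopts G) -> List.In (gadd g H) (leftopts (gadd G H)).
Proof. by move=> h; rewrite lo_add; apply List.in_or_app; left; apply: (in_map_game (fun g => gadd g H)). Qed.
Lemma inL2 G H g : List.In g (leftopts H) -> List.In (gadd G g) (leftopts (gadd G H)).
Proof. by move=> h; rewrite lo_add; apply List.in_or_app; right; apply: in_map_game. Qed.
Lemma inR1 G H g : List.In g (rightopts G) -> List.In (gadd g H) (rightopts (gadd G H)).
Proof. by move=> h; rewrite ro_add; apply List.in_or_app; left; apply: (in_map_game (fun g => gadd g H)). Qed.
Lemma inR2 G H g : List.In g (rightopts H) -> List.In (gadd G g) (rightopts (gadd G H)).
Proof. by move=> h; rewrite ro_add; apply List.in_or_app; right; apply: in_map_game. Qed.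

Lemma le_add1 G G' H : le (gadd G H) (gadd G' H) = le G G'.
Proof.
move: G G' H; apply: ind3 => G G' H IH.
apply/idP/idP => h.
- rewrite leE; apply/andP; split; apply/allIn => g hg; apply/negP => h2.
  + have h3 : le (gadd G' H) (gadd g H) by rewrite IH //; have := gsizeL hg; lia.
    by have := nle_L (inL1 H hg); rewrite (gle_trans h h3).
  + have h3 : le (gadd g H) (gadd G H) by rewrite IH //; have := gsizeR hg; lia.
    by have := nle_R (inR1 H hg); rewrite (gle_trans h3 h).
- move: (h); rewrite leE => /andP [/allIn a1 /allIn a2].
  rewrite leE lo_add ro_add !all_cat !all_map; apply/andP; split; apply/andP; split;
    apply/allIn => g hg /=.
  + rewrite IH; [exact: a1|have := gsizeL hg; lia].
  + apply/negP => h2.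
    have h3 : le (gadd G g) (gadd G' g) by rewrite IH //; have := gsizeL hg; lia.
    by have := nle_L (inL2 G' hg); rewrite (gle_trans h2 h3).
  + rewrite IH; [exact: a2|have := gsizeR hg; lia].
  + apply/negP => h2.
    have h3 : le (gadd G g) (gadd G' g) by rewrite IH //; have := gsizeR hg; lia.
    by have := nle_R (inR2 G hg); rewrite (gle_trans h3 h2).
Qed.

Lemma le_add2 G H H' : le (gadd G H) (gadd G H') = le H H'.
Proof.
move: H H' G; apply: ind3 => H H' G IH.
apply/idP/idP => h.
- rewrite leE; apply/andP; split; apply/allIn => g hg; apply/negP => h2.
  + have h3 : le (gadd G H') (gadd G g) by rewrite IH //; have := gsizeL hg; lia.
    by have := nle_L (inL2 G hg); rewrite (gle_trans h h3).
  + have h3 : le (gadd G g) (gadd G H) by rewrite IH //; have := gsizeR hg; lia.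
    by have := nle_R (inR2 G hg); rewrite (gle_trans h3 h).
- move: (h); rewrite leE => /andP [/allIn a1 /allIn a2].
  rewrite leE lo_add ro_add !all_cat !all_map; apply/andP; split; apply/andP; split;
    apply/allIn => g hg /=.
  + apply/negP => h2.
    have h3 : le (gadd g H) (gadd g H') by rewrite IH //; have := gsizeL hg; lia.
    by have := nle_L (inL1 H' hg); rewrite (gle_trans h2 h3).
  + rewrite IH; [exact: a1|have := gsizeL hg; lia].
  + apply/negP => h2.
    have h3 : le (gadd g H) (gadd g H') by rewrite IH //; have := gsizeR hg; lia.
    by have := nle_R (inR1 H hg); rewrite (gle_trans h3 h2).
  + rewrite IH; [exact: a2|have := gsizeR hg; lia].
Qed.

Local Open Scope ring_scope.

Lemma p2_int e : ((2 ^+ e : int)%:~R : rat) = 2%:R ^+ e.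
Proof. by rewrite rmorphXn. Qed.

Lemma p2_gt0 e : (0 : rat) < 2%:R ^+ e.
Proof. by rewrite exprn_gt0. Qed.

Lemma p2_neq0 e : (2%:R ^+ e : rat) != 0.
Proof. by rewrite gt_eqF ?p2_gt0. Qed.

Lemma abs_p2 e : `|(2 ^+ e : int)|%N = (2 ^ e)%N.
Proof. by rewrite abszX. Qed.

Lemma num_den_odd (j : int) e : odd `|j|%N ->
  numq (j%:~R / 2%:R ^+ e.+1) = j /\ denq (j%:~R / 2%:R ^+ e.+1) = 2 ^+ e.+1.
Proof.
move=> hj.
have c : coprime `|j| `|(2 ^+ e.+1 : int)| by rewrite abs_p2 coprime_pexpr // coprimen2.
rewrite -p2_int coprimeq_num // coprimeq_den //.
rewrite gtr0_sg ?mul1r ?exprn_gt0 //; split=> //.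
have h0 : (2 ^+ e.+1 : int) == 0 = false by rewrite gt_eqF ?exprn_gt0.
by rewrite h0 gtr0_norm ?exprn_gt0.
Qed.

Lemma red (j : int) e : exists j' e', (e' <= e)%N /\ (j%:~R / 2%:R ^+ e : rat) = j'%:~R / 2%:R ^+ e'
   /\ (e' = 0%N \/ odd `|j'|%N).
Proof.
elim: e j => [|e IH] j; first by exists j, 0%N; split; [|split; [|left]].
case hj: (odd `|j|%N); first by exists j, e.+1; split; [|split; [|right]].
have [j' [e' [h1 [h2 h3]]]] := IH (j %/ 2)%Z.
exists j', e'; split; first lia.
split=> //; rewrite -h2.
have hk : j = ((j %/ 2)%Z * 2) by move/negbT: hj; lia.
rewrite {1}hk intrM exprS; move: (p2_neq0 e) => hne; field; exact: hne.
Qed.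

Lemma half_eq (j : int) e : ~~ odd `|j|%N -> ((j %/ 2)%Z%:~R / 2%:R ^+ e : rat) = j%:~R / 2%:R ^+ e.+1.
Proof.
move=> hj; have hk : j = ((j %/ 2)%Z * 2) by lia.
rewrite {2}hk intrM exprS; move: (p2_neq0 e) => hne; field; exact: hne.
Qed.

Lemma canon_int_eq (j : int) : canon (j%:~R) = canon_int j.
Proof. by rewrite /canon numq_int denq_int. Qed.

Lemma canon_dyE (j : int) e : canon_dy j e = canon (j%:~R / 2%:R ^+ e).
Proof.
elim: e j => [|e IH] j; first by rewrite expr0 divr1 canon_int_eq.
rewrite /=; case hj: (odd `|j|%N).
  have [h1 h2] := num_den_odd e hj.
  by rewrite /canon h1 h2 abs_p2 trunc_expnK //= hj.
by rewrite IH half_eq // hj.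
Qed.

Definition lv (x : rat) : seq rat :=
  if denq x == 1 then (if 0 < numq x then [:: x - 1] else [::]) else [:: x - (denq x)%:~R^-1].
Definition rv (x : rat) : seq rat :=
  if denq x == 1 then (if numq x < 0 then [:: x + 1] else [::]) else [:: x + (denq x)%:~R^-1].

Lemma dyadic_den x : dyadic x -> exists e, denq x = 2 ^+ e /\ (e = 0%N \/ odd `|numq x|%N).
Proof.
move=> [j [e ->]]; have [j' [e' [_ [-> h]]]] := red j e.
case: e' h => [|e'] h.
  by exists 0%N; rewrite expr0 divr1 denq_int; split; [|left].
case: h => // h; have [h1 h2] := num_den_odd e' h.
by exists e'.+1; rewrite h1 h2; split; [|right].
Qed.

Lemma canon_lr x : dyadic x -> canon x = Game (map canon (lv x)) (map canon (rv x)).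
Proof.
move=> /dyadic_den [[|e] [hd ho]].
  have hx : x = (numq x)%:~R by rewrite -[x in LHS]divq_num_den hd divr1.
  rewrite /lv /rv hd eqxx; rewrite {1}/canon hd /=.
  move: hx; set j := numq x; clearbody j => ->.
  case: j => [[|k]|k] //=.
    have -> : ((k.+1)%:Z%:~R - 1 : rat) = (k%:Z)%:~R by rewrite -!pmulrn mulrS; ring.
    by rewrite canon_int_eq.
  have -> : ((Negz k)%:~R + 1 : rat) = ((Negz k + 1 : int))%:~R by rewrite intrD.
  rewrite canon_int_eq; case: k => [|k] //.
  by have -> : (Negz k.+1 + 1 : int) = Negz k by rewrite !NegzE; lia.
case: ho => // ho.
have hx : x = (numq x)%:~R / 2%:R ^+ e.+1 by rewrite -[x in LHS]divq_num_den hd p2_int.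
rewrite /lv /rv hd; rewrite {1}/canon hd abs_p2 trunc_expnK //= ho.
have hne : (2 ^+ e.+1 : int) == 1 = false.
  by apply/negbTE; rewrite exprS; lia.
rewrite hne !canon_dyE !half_eq; try (move: ho; lia).
rewrite p2_int.
have hne2 := p2_neq0 e.+1.
congr (Game [:: canon _] [:: canon _]); rewrite [in RHS]hx; move: (numq x) => j.
  by rewrite intrB; field.
by rewrite intrD; field.
Qed.

Lemma dyadic_cases x : dyadic x ->
  (exists j : int, x = j%:~R) \/ (exists (j : int) e, odd `|j|%N /\ x = j%:~R / 2%:R ^+ e.+1).
Proof.
move=> [j [e ->]]; have [j' [[|e'] [_ [-> [h|h]]]]] := red j e => //.
- by left; exists j'; rewrite expr0 divr1.
- by left; exists j'; rewrite expr0 divr1.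
- by right; exists j', e'.
Qed.

Lemma lv_int (j : int) : lv j%:~R = if 0 < j then [:: j%:~R - 1] else [::].
Proof. by rewrite /lv numq_int denq_int eqxx. Qed.
Lemma rv_int (j : int) : rv j%:~R = if j < 0 then [:: j%:~R + 1] else [::].
Proof. by rewrite /rv numq_int denq_int eqxx. Qed.

Lemma den_ne1 e : (2 ^+ e.+1 : int) == 1 = false.
Proof. by apply/negbTE; rewrite exprS; lia. Qed.

Lemma lv_odd (j : int) e : odd `|j|%N ->
  lv (j%:~R / 2%:R ^+ e.+1) = [:: j%:~R / 2%:R ^+ e.+1 - 1 / 2%:R ^+ e.+1].
Proof. by move=> h; have [h1 h2] := num_den_odd e h; rewrite /lv h2 den_ne1 p2_int div1r. Qed.
Lemma rv_odd (j : int) e : odd `|j|%N ->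
  rv (j%:~R / 2%:R ^+ e.+1) = [:: j%:~R / 2%:R ^+ e.+1 + 1 / 2%:R ^+ e.+1].
Proof. by move=> h; have [h1 h2] := num_den_odd e h; rewrite /rv h2 den_ne1 p2_int div1r. Qed.

Lemma lv_lt x l : l \in lv x -> l < x.
Proof.
rewrite /lv; case: ifP => _; first case: ifP => _ //.
  by rewrite inE => /eqP ->; rewrite ltrBlDr ltrDl.
by rewrite inE => /eqP ->; rewrite ltrBlDr ltrDl invr_gt0 ltr0z denq_gt0.
Qed.
Lemma rv_gt x r : r \in rv x -> x < r.
Proof.
rewrite /rv; case: ifP => _; first case: ifP => _ //.
  by rewrite inE => /eqP ->; rewrite ltrDl.
by rewrite inE => /eqP ->; rewrite ltrDl invr_gt0 ltr0z denq_gt0.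
Qed.

Lemma dyadic_int (j : int) : dyadic j%:~R.
Proof. by exists j, 0%N; rewrite expr0 divr1. Qed.

Lemma dyadicD x y : dyadic x -> dyadic y -> dyadic (x + y).
Proof.
move=> [j [e ->]] [k [f ->]]; exists (j * 2 ^+ f + k * 2 ^+ e), (e + f)%N.
rewrite intrD !intrM !p2_int exprD; have := p2_neq0 e; have := p2_neq0 f => h1 h2; field.
by rewrite h1 h2.
Qed.

Lemma dyadicN x : dyadic x -> dyadic (- x).
Proof. by move=> [j [e ->]]; exists (- j), e; rewrite intrN mulNr. Qed.

Lemma dyadicB x y : dyadic x -> dyadic y -> dyadic (x - y).
Proof. by move=> hx hy; apply: dyadicD => //; apply: dyadicN. Qed.

Lemma dyadicP e : dyadic (1 / 2%:R ^+ e).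
Proof. by exists 1, e. Qed.

Lemma dyadicV x : dyadic x -> dyadic ((denq x)%:~R^-1).
Proof.
move=> /dyadic_den [e [-> _]]; rewrite p2_int -div1r; exact: dyadicP.
Qed.

Lemma lv_dy x l : dyadic x -> l \in lv x -> dyadic l.
Proof.
move=> hx; rewrite /lv; case: ifP => _; first case: ifP => _ //.
  by rewrite inE => /eqP ->; apply: dyadicB => //; exact: (dyadic_int 1).
by rewrite inE => /eqP ->; apply: dyadicB => //; apply: dyadicV.
Qed.
Lemma rv_dy x l : dyadic x -> l \in rv x -> dyadic l.
Proof.
move=> hx; rewrite /rv; case: ifP => _; first case: ifP => _ //.
  by rewrite inE => /eqP ->; apply: dyadicD => //; exact: (dyadic_int 1).
by rewrite inE => /eqP ->; apply: dyadicD => //; apply: dyadicV.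
Qed.

Lemma close (j k : int) e f (x y : rat) : (f <= e.+1)%N -> x = j%:~R / 2%:R ^+ e.+1 -> y = k%:~R / 2%:R ^+ f ->
  x - 1 / 2%:R ^+ e.+1 < y -> y < x + 1 / 2%:R ^+ e.+1 -> x = y.
Proof.
move=> hf -> ->.
have hc := p2_gt0 e.+1; have hc0 := p2_neq0 e.+1; have hf0 := p2_neq0 f.
have hy : (k%:~R / 2%:R ^+ f : rat) = (k * 2 ^+ (e.+1 - f))%:~R / 2%:R ^+ e.+1.
  rewrite intrM p2_int -{2}(subnKC hf) exprD; have := p2_neq0 (e.+1 - f) => h; field.
  by rewrite hf0 h.
rewrite hy; move: (k * 2 ^+ (e.+1 - f)) => Z.
have key : forall a b : rat, (a / 2%:R ^+ e.+1 < b / 2%:R ^+ e.+1) = (a < b).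
  by move=> a b; apply: ltr_pM2r; rewrite invr_gt0.
have e1 : (j%:~R / 2%:R ^+ e.+1 - 1 / 2%:R ^+ e.+1 : rat) = (j - 1)%:~R / 2%:R ^+ e.+1.
  by rewrite intrB; field.
have e2 : (j%:~R / 2%:R ^+ e.+1 + 1 / 2%:R ^+ e.+1 : rat) = (j + 1)%:~R / 2%:R ^+ e.+1.
  by rewrite intrD; field.
rewrite e1 e2 !key !ltr_int => h1 h2.
by have -> : Z = j by lia.
Qed.

Lemma M x y : dyadic x -> dyadic y ->
  {in lv x, forall l, l < y} -> {in rv x, forall r, y < r} ->
  {in lv y, forall l, l < x} -> {in rv y, forall r, x < r} -> x = y.
Proof.
move=> hx hy.
case: (dyadic_cases hx) => [[j ->]|[j [e [hj ->]]]];
case: (dyadic_cases hy) => [[k ->]|[k [f [hk ->]]]].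
- rewrite !lv_int !rv_int; move=> h1 h2 h3 h4; congr intmul.
  have a1 : 0 < j -> j - 1 < k.
    move=> hj; have := h1 (j%:~R - 1); rewrite hj inE eqxx => /(_ isT).
    by rewrite -[1]/(1%:~R : rat) -intrB ltr_int.
  have a2 : j < 0 -> k < j + 1.
    move=> hj; have := h2 (j%:~R + 1); rewrite hj inE eqxx => /(_ isT).
    by rewrite -[1]/(1%:~R : rat) -intrD ltr_int.
  have a3 : 0 < k -> k - 1 < j.
    move=> hk; have := h3 (k%:~R - 1); rewrite hk inE eqxx => /(_ isT).
    by rewrite -[1]/(1%:~R : rat) -intrB ltr_int.
  have a4 : k < 0 -> j < k + 1.
    move=> hk; have := h4 (k%:~R + 1); rewrite hk inE eqxx => /(_ isT).
    by rewrite -[1]/(1%:~R : rat) -intrD ltr_int.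
  lia.
- rewrite lv_int rv_int (lv_odd f hk) (rv_odd f hk); move=> _ _ h3 h4; apply/esym; apply: (close (j := k) (e := f) (k := j) (f := 0%N)) => //.
  all: try by rewrite expr0 divr1.
  + by apply: h3; rewrite inE.
  + by apply: h4; rewrite inE.
- rewrite lv_int rv_int (lv_odd e hj) (rv_odd e hj); move=> h1 h2 _ _; apply: (close (j := j) (e := e) (k := k) (f := 0%N)) => //.
  all: try by rewrite expr0 divr1.
  + by apply: h1; rewrite inE.
  + by apply: h2; rewrite inE.
- rewrite (lv_odd f hk) (rv_odd f hk) (lv_odd e hj) (rv_odd e hj); move=> h1 h2 h3 h4; case: (leqP f.+1 e.+1) => hfe.
  + apply: (close (j := j) (e := e) (k := k) (f := f.+1)) => //.
    * by apply: h1; rewrite inE.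
    * by apply: h2; rewrite inE.
  + apply/esym; apply: (close (j := k) (e := f) (k := j) (f := e.+1)) => //; first exact: ltnW.
    * by apply: h3; rewrite inE.
    * by apply: h4; rewrite inE.
Qed.

Lemma O_arith x y : dyadic x -> dyadic y ->
  (x <= y) = (all (fun l => l < y) (lv x) && all (fun r => x < r) (rv y)).
Proof.
move=> hx hy; apply/idP/idP.
- move=> hxy; apply/andP; split; apply/allP => z hz.
  + exact: lt_le_trans (lv_lt hz) hxy.
  + exact: le_lt_trans hxy (rv_gt hz).
- move=> /andP [/allP a1 /allP a2]; rewrite leNgt; apply/negP => hyx.
  have e : x = y.
    apply: (M hx hy a1 _ _ a2).
    + by move=> r hr; exact: lt_trans hyx (rv_gt hr).
    + by move=> l hl; exact: lt_trans (lv_lt hl) hyx.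
  by move: hyx; rewrite e ltxx.
Qed.

Lemma p2_lt a b : (a < b)%N -> (1 / 2%:R ^+ b : rat) < 1 / 2%:R ^+ a.
Proof.
move=> h; rewrite -(subnKC (ltnW h)) exprD.
have hc : (1 : rat) < 2%:R ^+ (b - a) by rewrite exprn_egt1 ?ltr1n //; lia.
have hA := p2_gt0 a; have hA0 := p2_neq0 a.
rewrite ltr_pdivrMr ?mulr_gt0 ?p2_gt0 // mul1r mulrA mulVf // mul1r //.
Qed.

Lemma p2_lt1 e : (1 / 2%:R ^+ e.+1 : rat) < 1.
Proof. by have := p2_lt (ltn0Sn e); rewrite expr0 divr1. Qed.

Lemma lv_odd_red (j : int) e : odd `|j|%N ->
  exists j' e', (e' <= e)%N /\ (j%:~R : rat) / 2%:R ^+ e.+1 - 1 / 2%:R ^+ e.+1 = j'%:~R / 2%:R ^+ e' /\ (e' = 0%N \/ odd `|j'|%N).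
Proof.
move=> hj; have [j' [e' [h1 [h2 h3]]]] := red ((j - 1) %/ 2)%Z e.
exists j', e'; split=> //; split=> //; rewrite -h2 half_eq; last by move: hj; lia.
by rewrite intrB; field; apply: p2_neq0.
Qed.

Lemma rv_odd_red (j : int) e : odd `|j|%N ->
  exists j' e', (e' <= e)%N /\ (j%:~R : rat) / 2%:R ^+ e.+1 + 1 / 2%:R ^+ e.+1 = j'%:~R / 2%:R ^+ e' /\ (e' = 0%N \/ odd `|j'|%N).
Proof.
move=> hj; have [j' [e' [h1 [h2 h3]]]] := red ((j + 1) %/ 2)%Z e.
exists j', e'; split=> //; split=> //; rewrite -h2 half_eq; last by move: hj; lia.
by rewrite intrD; field; apply: p2_neq0.
Qed.

Lemma GP1 n l r : dyadic n -> l \in lv n -> r \in rv l -> n < r.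
Proof.
move=> hn; case: (dyadic_cases hn) => [[j ->]|[j [e [hj ->]]]].
  rewrite lv_int; case: ifP => // hj; rewrite inE => /eqP ->.
  rewrite -[1]/(1%:~R : rat) -intrB rv_int; case: ifP => //; lia.
rewrite lv_odd // inE => /eqP ->.
have [j' [e' [h1 [he h3]]]] := lv_odd_red e hj; rewrite he.
have hd := p2_lt1 e.
case: e' h1 he h3 => [|e'] h1 he h3.
  rewrite expr0 divr1 rv_int; case: ifP => // _; rewrite inE => /eqP ->.
  rewrite -(divr1 j'%:~R) -(expr0 2%:R) -he; lra.
case: h3 => // h3; rewrite rv_odd // inE => /eqP ->; rewrite -he.
have := p2_lt (ltnSn e); have := p2_lt (h1 : (e'.+1 < e.+1)%N); lra.
Qed.

Lemma GP2 n l r : dyadic n -> r \in rv n -> l \in lv r -> l < n.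
Proof.
move=> hn; case: (dyadic_cases hn) => [[j ->]|[j [e [hj ->]]]].
  rewrite rv_int; case: ifP => // hj; rewrite inE => /eqP ->.
  rewrite -[1]/(1%:~R : rat) -intrD lv_int; case: ifP => //; lia.
rewrite rv_odd // inE => /eqP ->.
have [j' [e' [h1 [he h3]]]] := rv_odd_red e hj; rewrite he.
have hd := p2_lt1 e.
case: e' h1 he h3 => [|e'] h1 he h3.
  rewrite expr0 divr1 lv_int; case: ifP => // _; rewrite inE => /eqP ->.
  rewrite -(divr1 j'%:~R) -(expr0 2%:R) -he; lra.
case: h3 => // h3; rewrite lv_odd // inE => /eqP ->; rewrite -he.
have := p2_lt (ltnSn e); have := p2_lt (h1 : (e'.+1 < e.+1)%N); lra.
Qed.

Lemma memIn (T : eqType) (x : T) s : x \in s -> List.In x s.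
Proof. elim: s => //= y s IH; rewrite inE => /orP [/eqP ->|/IH]; [left|right] => //. Qed.

Lemma lo_canon x : dyadic x -> leftopts (canon x) = map canon (lv x).
Proof. by move=> h; rewrite {1}(canon_lr h). Qed.
Lemma ro_canon x : dyadic x -> rightopts (canon x) = map canon (rv x).
Proof. by move=> h; rewrite {1}(canon_lr h). Qed.

Lemma size_lv x l : dyadic x -> l \in lv x -> (gsize (canon l) < gsize (canon x))%N.
Proof. by move=> h hl; apply: gsizeL; rewrite lo_canon //; apply: in_map_game; apply: memIn. Qed.
Lemma size_rv x l : dyadic x -> l \in rv x -> (gsize (canon l) < gsize (canon x))%N.
Proof. by move=> h hl; apply: gsizeR; rewrite ro_canon //; apply: in_map_game; apply: memIn. Qed.

Lemma le_canon_aux N : forall x y, (gsize (canon x) + gsize (canon y) < N)%N -> dyadic x -> dyadic y ->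
   le (canon x) (canon y) = (x <= y).
Proof.
elim: N => [|N IH] x y // hN hx hy.
rewrite leE lo_canon // ro_canon // !all_map O_arith //.
congr andb; apply: eq_in_all => z hz /=.
  by rewrite IH ?ltNge //; [have := size_lv hx hz; lia|apply: lv_dy hz].
by rewrite IH ?ltNge //; [have := size_rv hy hz; lia|apply: rv_dy hz].
Qed.

Lemma le_canon x y : dyadic x -> dyadic y -> le (canon x) (canon y) = (x <= y).
Proof. exact: (le_canon_aux (ltnSn _)). Qed.

Lemma lt_canon x y : dyadic x -> dyadic y -> ~~ le (canon y) (canon x) = (x < y).
Proof. by move=> hx hy; rewrite le_canon // ltNge. Qed.

Lemma ident (KL KR : seq game) z : dyadic z ->
  (forall k, List.In k KL -> ~~ le (canon z) k) ->
  (forall k, List.In k KR -> ~~ le k (canon z)) ->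
  (forall l, l \in lv z -> exists k, List.In k KL /\ le (canon l) k) ->
  (forall r, r \in rv z -> exists k, List.In k KR /\ le k (canon r)) ->
  game_eq (Game KL KR) (canon z).
Proof.
move=> hz h1 h2 h3 h4; apply/andP; split.
- rewrite leE /= ro_canon // all_map; apply/andP; split; first by apply/allIn.
  apply/allP => r hr /=; apply/negP => hle.
  have [k [hk hk2]] := h4 r hr.
  by have := nle_R (G := Game KL KR) hk; rewrite (gle_trans hk2 hle).
- rewrite leE /= lo_canon // all_map; apply/andP; split; last by apply/allIn.
  apply/allP => l hl /=; apply/negP => hle.
  have [k [hk hk2]] := h3 l hl.
  by have := nle_L (G := Game KL KR) hk; rewrite (gle_trans hle hk2).
Qed.

Notation C := canon.

Lemma B_comp (a b x : rat) : dyadic a -> dyadic b -> dyadic x -> a < x -> x < b ->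
  le (Game [:: C a] [:: C b]) (C x) || le (C x) (Game [:: C a] [:: C b]).
Proof.
move=> ha hb hx hax hxb.
case E: (all (fun r => ~~ le (C r) (Game [:: C a] [:: C b])) (rv x)).
  by apply/orP; left; rewrite leE /= ro_canon // all_map (lt_canon ha hx) hax.
apply/orP; right; move/negbT: E => /allPn [r hr /negPn hle].
rewrite leE /= lo_canon // all_map (lt_canon hx hb) hxb andbT.
apply/andP; split => //; apply/allP => l hl /=; apply/negP => hle2.
have := gle_trans hle hle2; rewrite le_canon; [|exact: (rv_dy hx hr)|exact: (lv_dy hx hl)].
by rewrite leNgt (lt_trans (lv_lt hl) (rv_gt hr)).
Qed.

Lemma bal_eq (a b n : rat) : dyadic a -> dyadic b -> dyadic n -> a < n -> n < b ->
  game_eq (gadd (Game [:: C a] [:: C b]) (Game [:: C a] [:: C b])) (gadd (C n) (C n)) ->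
  game_eq (Game [:: C a] [:: C b]) (C n).
Proof.
set B := Game _ _ => ha hb hn han hnb /andP [h1 h2].
case/orP: (B_comp ha hb hn han hnb) => h; rewrite /game_eq h ?andbT //=.
- rewrite -(le_add2 (C n)); apply: gle_trans h2 _; by rewrite le_add1.
- rewrite -(le_add2 B); apply: gle_trans h1 _; by rewrite le_add1.
Qed.

Lemma bal_P (a b n : rat) : dyadic a -> dyadic b -> dyadic n ->
  game_eq (Game [:: C a] [:: C b]) (C n) ->
  {in lv n, forall l, l <= a} /\ {in rv n, forall r, b <= r}.
Proof.
set B := Game _ _ => ha hb hn /andP [h1 h2]; split.
- move=> l hl; rewrite leNgt; apply/negP => hal.
  have hl' := lv_dy hn hl.
  move: h2; rewrite leE lo_canon // all_map => /andP [/allP /(_ l hl) /= h _].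
  move: h; rewrite leE /= (lt_canon ha hl') hal /= (ro_canon hl') all_map => /allPn [r hr /negPn hle].
  have := gle_trans hle h1; rewrite le_canon; [|exact: (rv_dy hl' hr)|by []]; rewrite leNgt.
  by rewrite (GP1 hn hl hr).
- move=> r hr; rewrite leNgt; apply/negP => hrb.
  have hr' := rv_dy hn hr.
  move: h1; rewrite leE ro_canon // all_map => /andP [_ /allP /(_ r hr) /= h].
  move: h; rewrite leE /= (lt_canon hr' hb) hrb andbT (lo_canon hr') all_map andbT => /allPn [l hl /negPn hle].
  have := gle_trans h2 hle; rewrite le_canon; [|by []|exact: (lv_dy hr' hl)]; rewrite leNgt.
  by rewrite (GP2 hn hr hl).
Qed.

Lemma n_form (n : rat) p : dyadic n -> {in lv n, forall l, l <= n + - (1 / 2%:R ^+ p)} ->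
  exists N : int, n = N%:~R / 2%:R ^+ p.
Proof.
move=> hn hP; case: (dyadic_cases hn) => [[j hnj]|[j [e [hj hnj]]]]; subst n.
  exists (j * 2 ^+ p); rewrite intrM p2_int; have := p2_neq0 p => h; field; exact: h.
move: hP; rewrite lv_odd // => hP; have := hP _ (mem_head _ _) => h.
have hep : (e.+1 <= p)%N.
  rewrite leqNgt; apply/negP => /p2_lt h2; move: h; lra.
exists (j * 2 ^+ (p - e.+1)); rewrite intrM p2_int -{2}(subnKC hep) exprD.
have := p2_neq0 e.+1; have := p2_neq0 (p - e.+1) => h1 h2; field.
by rewrite h1 h2.
Qed.

Definition T (n : rat) p m u := n + 1 / 2%:R ^+ p - 1 / 2%:R ^+ (p + m) + u / 2%:R ^+ (p + m + 1).

Lemma OF0 (N : int) p m' : T (N%:~R / 2%:R ^+ p) p m'.+1 0 =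
  (2 * (N * 2 ^+ m' + 2 ^+ m' - 1) + 1)%:~R / 2%:R ^+ (p + m').+1.
Proof.
rewrite /T mul0r addr0 !(intrD, intrM, intrB) !p2_int addnS !exprS exprD.
have := p2_neq0 p; have := p2_neq0 m' => h1 h2; field.
by rewrite h1 h2.
Qed.

Lemma OF1 (N j : int) p m q : odd `|j|%N -> T (N%:~R / 2%:R ^+ p) p m (j%:~R / 2%:R ^+ q.+1) =
  (2 * (N * 2 ^+ (m + q).+1 + 2 ^+ (m + q).+1 - 2 ^+ q.+1 + ((j - 1) %/ 2)%Z) + 1)%:~R / 2%:R ^+ (p + m + q).+1.+1.
Proof.
move=> hj; have hK : (2 * ((j - 1) %/ 2)%Z + 1 = j) by lia.
have -> : ((2 * (N * 2 ^+ (m + q).+1 + 2 ^+ (m + q).+1 - 2 ^+ q.+1 + ((j - 1) %/ 2)%Z) + 1) : int)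
   = 2 * (N * 2 ^+ (m + q).+1 + 2 ^+ (m + q).+1 - 2 ^+ q.+1) + j.
  by move: ((j - 1) %/ 2)%Z hK => K0 <-; ring.
rewrite /T !(intrD, intrM, intrB, intrN) !p2_int !addnS !exprS !exprD.
by field; rewrite ?p2_neq0.
Qed.

Lemma TL0 n p m' : T n p m'.+1 0 - 1 / 2%:R ^+ (p + m').+1 = T n p m' 0.
Proof. by rewrite /T !mul0r !addr0 !addnS ?addn0 !exprS; field; rewrite ?p2_neq0. Qed.
Lemma TR0 n p m' : T n p m'.+1 0 + 1 / 2%:R ^+ (p + m').+1 = n - - (1 / 2%:R ^+ p).
Proof. by rewrite /T !mul0r !addr0 !addnS !exprS; field; rewrite ?p2_neq0. Qed.
Lemma TL1 n p m q u : T n p m u - 1 / 2%:R ^+ (p + m + q).+2 = T n p m (u - 1 / 2%:R ^+ q.+1).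
Proof. by rewrite /T !addnS ?addn0 !exprS !exprD; field; rewrite ?p2_neq0. Qed.
Lemma TR1 n p m q u : T n p m u + 1 / 2%:R ^+ (p + m + q).+2 = T n p m (u + 1 / 2%:R ^+ q.+1).
Proof. by rewrite /T !addnS ?addn0 !exprS !exprD; field; rewrite ?p2_neq0. Qed.
Lemma TS n p m : T n p m 1 = T n p m.+1 0.
Proof. by rewrite /T !addnS ?addn0 !exprS !exprD; field; rewrite ?p2_neq0. Qed.

Lemma p2_le a b : (a <= b)%N -> (1 / 2%:R ^+ b : rat) <= 1 / 2%:R ^+ a.
Proof. by rewrite leq_eqVlt => /orP [/eqP ->|/p2_lt /ltW]. Qed.

Lemma dyadicM x y : dyadic x -> dyadic y -> dyadic (x * y).
Proof.
move=> [j [e ->]] [k [f ->]]; exists (j * k), (e + f)%N.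
by rewrite intrM exprD; field; rewrite ?p2_neq0.
Qed.

Lemma dyadic_T n p m u : dyadic n -> dyadic u -> dyadic (T n p m u).
Proof.
move=> hn hu; rewrite /T; apply: dyadicD; last by apply: dyadicM => //; rewrite -div1r; apply: dyadicP.
by apply: dyadicB; [apply: dyadicD => //|]; apply: dyadicP.
Qed.

Lemma T_ge n p m u : 0 <= u -> n <= T n p m u.
Proof.
move=> hu; rewrite /T; have h := p2_le (leq_addr m p).
have : 0 <= u / 2%:R ^+ (p + m + 1) by rewrite divr_ge0 // ltW ?p2_gt0.
lra.
Qed.

Lemma T_lt n p m u : u < 1 -> T n p m u < n - - (1 / 2%:R ^+ p).
Proof.
move=> hu; rewrite /T.
have h1 : u / 2%:R ^+ (p + m + 1) < 1 / 2%:R ^+ (p + m + 1).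
  by rewrite ltr_pM2r // invr_gt0 p2_gt0.
have := p2_lt (ltnSn (p + m)); rewrite addn1 in h1 *; lra.
Qed.

Lemma T_mono n p m u u' : u < u' -> T n p m u < T n p m u'.
Proof.
move=> h; rewrite /T ltrD2l; by rewrite ltr_pM2r // invr_gt0 p2_gt0.
Qed.

Lemma eq_le1 X Y : game_eq X Y -> le X Y. Proof. by case/andP. Qed.
Lemma eq_le2 X Y : game_eq X Y -> le Y X. Proof. by case/andP. Qed.

Lemma main (N : int) (p : nat) :
  game_eq (Game [:: C (N%:~R / 2%:R ^+ p + - (1 / 2%:R ^+ p))] [:: C (N%:~R / 2%:R ^+ p - - (1 / 2%:R ^+ p))])
          (C (N%:~R / 2%:R ^+ p)) ->
  forall Nb m u, (gsize (C (m%:R + u)) < Nb)%N -> dyadic u -> 0 <= u -> u < 1 ->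
  game_eq (ordsum (Game [:: C (N%:~R / 2%:R ^+ p + - (1 / 2%:R ^+ p))] [:: C (N%:~R / 2%:R ^+ p - - (1 / 2%:R ^+ p))]) (C (m%:R + u)))
          (C (T (N%:~R / 2%:R ^+ p) p m u)).
Proof.
set n := N%:~R / 2%:R ^+ p; set a := n + - _; set b := n - - _; set B := Game _ _.
move=> hB.
have hnd : dyadic n by exists N, p.
have hd := dyadicP p.
have had : dyadic a by apply: dyadicD => //; apply: dyadicN.
have hbd : dyadic b by apply: dyadicB => //; apply: dyadicN.
have hp : (0 : rat) < 1 / 2%:R ^+ p by rewrite div1r invr_gt0 p2_gt0.
have han : a < n by rewrite /a; lra.
elim=> [|Nb IH] m u // hs hu hu0 hu1.
case: (eqVneq u 0) => [hu_0|hu_ne].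
- subst u; case: m hs => [|m'] hs.
  + have -> : ((0%:R : rat) + 0) = (0 : int)%:~R by rewrite addr0.
    rewrite (canon_lr (dyadic_int 0)) lv_int rv_int /=.
    have -> : T n p 0 0 = n by rewrite /T addn0 mul0r addr0 addrK.
    exact: hB.
  + have ey : ((m'.+1%:R : rat) + 0) = (m'.+1 : int)%:~R by rewrite addr0.
    rewrite ey in hs *.
    have hl : (m'.+1 : int)%:~R - 1 \in lv (m'.+1 : int)%:~R by rewrite lv_int mem_head.
    have hs' := size_lv (dyadic_int _) hl.
    have e1 : ((m'.+1 : int)%:~R - 1 : rat) = m'%:R + 0.
      by rewrite addr0; change ((m'.+1)%:R - 1 = m'%:R :> rat); rewrite -natr1 addrK.
    rewrite e1 in hs'.
    have IH1 := IH m' 0 ltac:(lia) (dyadic_int 0) (lexx 0) ltr01.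
    rewrite (canon_lr (dyadic_int _)) lv_int rv_int /= e1.
    have hz := OF0 N p m'; rewrite -/n in hz.
    have hzo : odd `|(2 * (N * 2 ^+ m' + 2 ^+ m' - 1) + 1)%R|%N by lia.
    have hzd : dyadic (T n p m'.+1 0) by rewrite hz; eexists; eexists.
    have hTm : T n p m' 0 < T n p m'.+1 0.
      by rewrite -TL0; have := p2_gt0 (p + m').+1; rewrite div1r; have := invr_gt0 (2%:R ^+ (p + m').+1 : rat); lra.
    have hTd : dyadic (T n p m' 0) by apply: dyadic_T.
    apply: ident => //.
    * move=> k [<-|[<-|[]]].
      - by rewrite (lt_canon had hzd); apply: lt_le_trans han (T_ge _ _ _ (lexx 0)).
      - apply/negP => h; have := gle_trans h (eq_le1 IH1); rewrite (le_canon hzd hTd).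
        by rewrite leNgt hTm.
    * move=> k [<-|[]]; by rewrite (lt_canon hzd hbd) T_lt.
    * move=> l; rewrite hz lv_odd // inE => /eqP ->; rewrite -hz TL0.
      by exists (ordsum B (C (m'%:R + 0))); split; [right; left|exact: eq_le2 IH1].
    * move=> r; rewrite hz rv_odd // inE => /eqP ->; rewrite -hz TR0.
      by exists (C b); split; [left|exact: gle_refl].
- have hup : 0 < u by rewrite lt_neqAle eq_sym hu_ne hu0.
  case: (dyadic_cases hu) => [[j hj]|[j [q [hjo hj]]]]; subst u.
    by move: hup hu1; rewrite ltr0z -[1]/(1%:~R : rat) ltr_int; lia.
  have hj0 : 0 < j by move: hup; rewrite pmulr_lgt0 ?invr_gt0 ?p2_gt0 // ltr0z.
  have hj1 : j < 2 ^+ q.+1.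
    move: hu1; rewrite ltr_pdivrMr ?p2_gt0 // mul1r -p2_int ltr_int //.
  have ey : (m%:R + j%:~R / 2%:R ^+ q.+1 : rat) = (2 * (m%:Z * 2 ^+ q) + j)%:~R / 2%:R ^+ q.+1.
    by rewrite !(intrD, intrM) p2_int exprS; field; rewrite ?p2_neq0.
  have hyo : odd `|(2 * (m%:Z * 2 ^+ q) + j)%R|%N by move: (m%:Z * 2 ^+ q) => W; lia.
  have hyd : dyadic ((2 * (m%:Z * 2 ^+ q) + j)%:~R / 2%:R ^+ q.+1) by eexists; eexists.
  rewrite ey in hs *.
  move: hyo hyd hs; set Y := (2 * (m%:Z * 2 ^+ q) + j); move=> hyo hyd hs.
  have hsL : (gsize (C (Y%:~R / 2%:R ^+ q.+1 - 1 / 2%:R ^+ q.+1)) < gsize (C (Y%:~R / 2%:R ^+ q.+1)))%N.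
    by apply: size_lv hyd _; rewrite lv_odd // mem_head.
  have hsR : (gsize (C (Y%:~R / 2%:R ^+ q.+1 + 1 / 2%:R ^+ q.+1)) < gsize (C (Y%:~R / 2%:R ^+ q.+1)))%N.
    by apply: size_rv hyd _; rewrite rv_odd // mem_head.
  have eL : (Y%:~R / 2%:R ^+ q.+1 - 1 / 2%:R ^+ q.+1 : rat) = m%:R + (j%:~R / 2%:R ^+ q.+1 - 1 / 2%:R ^+ q.+1).
    by rewrite -ey addrA.
  have eR : (Y%:~R / 2%:R ^+ q.+1 + 1 / 2%:R ^+ q.+1 : rat) = m%:R + (j%:~R / 2%:R ^+ q.+1 + 1 / 2%:R ^+ q.+1).
    by rewrite -ey addrA.
  have hdq := dyadicP q.+1.
  have hqp : (0 : rat) < 1 / 2%:R ^+ q.+1 by rewrite div1r invr_gt0 p2_gt0.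
  have IHL : game_eq (ordsum B (C (Y%:~R / 2%:R ^+ q.+1 - 1 / 2%:R ^+ q.+1)))
                     (C (T n p m (j%:~R / 2%:R ^+ q.+1 - 1 / 2%:R ^+ q.+1))).
    rewrite eL; apply: IH; [by rewrite -eL; lia|by apply: dyadicB| |].
    + have -> : (j%:~R / 2%:R ^+ q.+1 - 1 / 2%:R ^+ q.+1 : rat) = (j - 1)%:~R / 2%:R ^+ q.+1.
        by rewrite intrB; field; rewrite ?p2_neq0.
      by apply: divr_ge0; [rewrite ler0z; lia|apply: ltW; apply: p2_gt0].
    + by lra.
  have IHR : game_eq (ordsum B (C (Y%:~R / 2%:R ^+ q.+1 + 1 / 2%:R ^+ q.+1)))
                     (C (T n p m (j%:~R / 2%:R ^+ q.+1 + 1 / 2%:R ^+ q.+1))).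
    have ej : (j%:~R / 2%:R ^+ q.+1 + 1 / 2%:R ^+ q.+1 : rat) = (j + 1)%:~R / 2%:R ^+ q.+1.
      by rewrite intrD; field; rewrite ?p2_neq0.
    case: (ltrP (j + 1) (2 ^+ q.+1)) => hj2.
      rewrite eR; apply: IH; [by rewrite -eR; lia|by apply: dyadicD| |].
      + by lra.
      + by rewrite ej ltr_pdivrMr ?p2_gt0 // mul1r -p2_int ltr_int.
    have hj3 : j + 1 = 2 ^+ q.+1 by lia.
    have e1 : (j%:~R / 2%:R ^+ q.+1 + 1 / 2%:R ^+ q.+1 : rat) = 1.
      by rewrite ej hj3 p2_int divff ?p2_neq0.
    rewrite eR e1 TS.
    have -> : (m%:R + 1 : rat) = m.+1%:R + 0 by rewrite addr0 natr1.
    apply: IH; [|exact: (dyadic_int 0)|by []|by []].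
    move: hsR; rewrite eR e1 addr0 natr1 => h; apply: (leq_trans h); by rewrite -ltnS.
  rewrite (canon_lr hyd) (lv_odd _ hyo) (rv_odd _ hyo) /=.
  have hz := @OF1 N j p m q hjo; rewrite -/n in hz.
  have hzo : odd `|(2 * (N * 2 ^+ (m + q).+1 + 2 ^+ (m + q).+1 - 2 ^+ q.+1 + ((j - 1) %/ 2)%Z) + 1)%R|%N by lia.
  have hzd : dyadic (T n p m (j%:~R / 2%:R ^+ q.+1)) by rewrite hz; eexists; eexists.
  have hLd : dyadic (T n p m (j%:~R / 2%:R ^+ q.+1 - 1 / 2%:R ^+ q.+1)).
    by apply: dyadic_T => //; apply: dyadicB.
  have hRd : dyadic (T n p m (j%:~R / 2%:R ^+ q.+1 + 1 / 2%:R ^+ q.+1)).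
    by apply: dyadic_T => //; apply: dyadicD.
  have hTL : T n p m (j%:~R / 2%:R ^+ q.+1 - 1 / 2%:R ^+ q.+1) < T n p m (j%:~R / 2%:R ^+ q.+1).
    by apply: T_mono; lra.
  have hTR : T n p m (j%:~R / 2%:R ^+ q.+1) < T n p m (j%:~R / 2%:R ^+ q.+1 + 1 / 2%:R ^+ q.+1).
    by apply: T_mono; lra.
  apply: ident => //.
  + move=> k [<-|[<-|[]]].
    * by rewrite (lt_canon had hzd); apply: lt_le_trans han (T_ge _ _ _ hu0).
    * apply/negP => h; have := gle_trans h (eq_le1 IHL); rewrite (le_canon hzd hLd).
      by rewrite leNgt hTL.
  + move=> k [<-|[<-|[]]].
    * by rewrite (lt_canon hzd hbd) T_lt.
    * apply/negP => h; have := gle_trans (eq_le2 IHR) h; rewrite (le_canon hRd hzd).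
      by rewrite leNgt hTR.
  + move=> l; rewrite hz lv_odd // inE => /eqP ->; rewrite -hz TL1.
    by exists (ordsum B (C (Y%:~R / 2%:R ^+ q.+1 - 1 / 2%:R ^+ q.+1))); split; [right; left|exact: eq_le2 IHL].
  + move=> r; rewrite hz rv_odd // inE => /eqP ->; rewrite -hz TR1.
    by exists (ordsum B (C (Y%:~R / 2%:R ^+ q.+1 + 1 / 2%:R ^+ q.+1))); split; [right; left|exact: eq_le1 IHR].
Qed.

Lemma geq_trans X Y Z : game_eq X Y -> game_eq Y Z -> game_eq X Z.
Proof.
move=> /andP [h1 h2] /andP [h3 h4]; apply/andP; split; [exact: gle_trans h1 h3|exact: gle_trans h4 h2].
Qed.

Unset Implicit Arguments.

Theorem theorem4p5 (n : rat) (p : nat) :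
  dyadic n ->
  balanced n (- (1 / 2%:R ^+ p)) ->
  forall (m q a : nat),
    ((odd a && (0 < a)%N && (a < 2 ^ q)%N) || (a == 0%N)) ->
    (0 : rat) < m%:R + a%:R / 2%:R ^+ q ->
    forall H : game,
      game_eq H (canon (m%:R + a%:R / 2%:R ^+ q)) ->
      game_eq (ordsum (ball n (- (1 / 2%:R ^+ p))) H)
              (canon (n + 1 / 2%:R ^+ p - 1 / 2%:R ^+ (p + m)
                        + a%:R / 2%:R ^+ (p + m + q + 1))).
Proof.
move=> hn hbal m q a hcond _ H hH.
rewrite /ball; rewrite /balanced /ball in hbal.
have hd := dyadicP p.
have hp : (0 : rat) < 1 / 2%:R ^+ p by rewrite div1r invr_gt0 p2_gt0.
have had : dyadic (n + - (1 / 2%:R ^+ p)) by apply: dyadicD => //; apply: dyadicN.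
have hbd : dyadic (n - - (1 / 2%:R ^+ p)) by apply: dyadicB => //; apply: dyadicN.
have hB := bal_eq had hbd hn ltac:(lra) ltac:(lra) hbal.
have [hP1 _] := bal_P had hbd hn hB.
have [N hN] := n_form hn hP1.
subst n.
have hu : dyadic (a%:R / 2%:R ^+ q : rat) by exists a, q.
have hu0 : (0 : rat) <= a%:R / 2%:R ^+ q by apply: divr_ge0; [apply: ler0n|apply: ltW; apply: p2_gt0].
have hu1 : (a%:R / 2%:R ^+ q : rat) < 1.
  rewrite ltr_pdivrMr ?p2_gt0 // mul1r -natrX ltr_nat.
  case/orP: hcond => [/andP [_ h]|/eqP ->] //; by rewrite expn_gt0.
have hM := main hB (ltnSn _) hu hu0 hu1.
apply: geq_trans; last first.
  have -> : (N%:~R / 2%:R ^+ p + 1 / 2%:R ^+ p - 1 / 2%:R ^+ (p + m) + a%:R / 2%:R ^+ (p + m + q + 1) : rat)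
    = T (N%:~R / 2%:R ^+ p) p m (a%:R / 2%:R ^+ q).
    by rewrite /T !exprD; field; rewrite ?p2_neq0.
  exact: hM.
move: hH => /andP [h1 h2]; apply/andP; split; by rewrite le_ordsum.
Qed.
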